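(* Let $f$ be a real-valued symmetric ternary tensor in $(\mathbb{C}^3)^{\otimes 3}$, and suppose there exist $\alpha,\beta,\gamma\in\mathbb{C}^3$ with $f=\alpha^{\otimes 3}+\beta^{\otimes 3}+\gamma^{\otimes 3}$ and $\langle\alpha,\beta\rangle=\langle\beta,\gamma\rangle=\langle\gamma,\alpha\rangle=0$. Then there exist real vectors $\alpha',\beta',\gamma'\in\mathbb{R}^3$ with $f=\alpha'^{\otimes 3}+\beta'^{\otimes 3}+\gamma'^{\otimes 3}$ and $\langle\alpha',\beta'\rangle=\langle\beta',\gamma'\rangle=\langle\gamma',\alpha'\rangle=0$. Consequently, there is a $3\times3$ real orthogonal matrix $T$ and $a,b,c\in\mathbb{R}$ such that $T^{\otimes 3} f = a\,e_1^{\otimes 3}+b\,e_2^{\otimes 3}+c\,e_3^{\otimes 3}$.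
   Context: A ternary signature on domain $\{1,2,3\}$ (colors R, G, B) is a function $\{1,2,3\}^3\to\mathbb{C}$, identified with a tensor in $(\mathbb{C}^3)^{\otimes 3}$; it is symmetric if invariant under permutation of its arguments. For $u,v\in\mathbb{C}^n$, $\langle u,v\rangle=\sum_j u_jv_j$ (bilinear, no conjugation). $e_1,e_2,e_3$ are the standard basis vectors. For a matrix $T$, $Tf$ denotes $T^{\otimes 3}f$. *)

(* Defs.v *)
From HB Require Import structures.
From mathcomp Require Import all_boot all_order all_algebra.
From mathcomp Require Import reals.
From mathcomp Require Export complex.
Set Implicit Arguments. Unset Strict Implicit. Unset Printing Implicit Defensive.
Import Order.TTheory GRing.Theory Num.Theory.
Local Open Scope ring_scope.

(* A ternary signature on domain {1,2,3}, i.e. a tensor in (K^3)^{(x)3},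
   indices 'I_3 = {0,1,2} standing for {1,2,3}. *)
Definition tensor3 (K : Type) := 'I_3 -> 'I_3 -> 'I_3 -> K.

Definition symmetric3 (K : Type) (f : tensor3 K) : Prop :=
  forall i j k, f i j k = f j i k /\ f i j k = f i k j.

Definition cube3 (K : pzRingType) (v : 'I_3 -> K) : tensor3 K :=
  fun i j k => v i * v j * v k.

(* bilinear form <u,v> = sum_j u_j v_j (no conjugation) *)
Definition bdot (K : pzRingType) (u v : 'I_3 -> K) : K :=
  \sum_(j < 3) u j * v j.

Definition tens_act (K : pzRingType) (T : 'M[K]_3) (f : tensor3 K) : tensor3 K :=
  fun i j k => \sum_(p < 3) \sum_(q < 3) \sum_(r < 3) T i p * T j q * T k r * f p q r.

Definition ebasis (K : pzRingType) (l : 'I_3) : 'I_3 -> K :=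
  fun i => (i == l)%:R.

Definition cvec (R : rcfType) (v : 'I_3 -> R) : 'I_3 -> R[i] :=
  fun i => (v i)%:C%C.
Definition ctens (R : rcfType) (f : tensor3 R) : tensor3 R[i] :=
  fun i j k => (f i j k)%:C%C.

Definition real_valued (R : rcfType) (f : tensor3 R[i]) : Prop :=
  forall i j k, complex.Im (f i j k) = 0.

(* Main.v *)
Require Import Defs.
From HB Require Import structures.
From mathcomp Require Import all_boot all_order all_algebra.
From mathcomp Require Import reals.
From mathcomp Require Import complex.
From mathcomp Require Import ring lra.
Import Order.TTheory GRing.Theory Num.Theory.
Local Open Scope ring_scope.

Notation o0 := (@Ordinal 3 0 isT).
Notation o1 := (@Ordinal 3 1 isT).
Notation o2 := (@Ordinal 3 2 isT).

Lemma sum3 (V : nmodType) (F : 'I_3 -> V) :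
  \sum_(j < 3) F j = F o0 + F o1 + F o2.
Proof.
rewrite !big_ord_recr big_ord0 /= add0r.
by congr (F _ + F _ + F _); apply: val_inj.
Qed.

Lemma ord3P (P : 'I_3 -> Prop) : P o0 -> P o1 -> P o2 -> forall i, P i.
Proof.
move=> h0 h1 h2 [[|[|[|n]]] Hn] //.
- by rewrite (_ : Ordinal Hn = o0) //; apply: val_inj.
- by rewrite (_ : Ordinal Hn = o1) //; apply: val_inj.
- by rewrite (_ : Ordinal Hn = o2) //; apply: val_inj.
Qed.

Lemma bdotC (K : comNzRingType) (u v : 'I_3 -> K) : bdot u v = bdot v u.
Proof. rewrite /bdot !sum3; ring. Qed.

Lemma contr (K : comNzRingType) (a b c v : 'I_3 -> K) l j :
  \sum_(k < 3) (cube3 a l j k + cube3 b l j k + cube3 c l j k) * v k =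
  a l * a j * bdot a v + b l * b j * bdot b v + c l * c j * bdot c v.
Proof. rewrite /bdot /cube3 !sum3; ring. Qed.

Lemma Im0E (R : rcfType) (x : R[i]) : complex.Im x = 0 -> x = (complex.Re x)%:C%C.
Proof. by case: x => a b /= ->. Qed.

Lemma conj_re (R : rcfType) (x : R[i]) : complex.Im x = 0 -> (x^*)%C = x.
Proof. by case: x => a b /= ->; rewrite oppr0. Qed.

Lemma normsq_c (R : rcfType) (x : R[i]) :
  (x^*)%C * x = (complex.Re x ^+ 2 + complex.Im x ^+ 2)%:C%C.
Proof.
case: x => a b; rewrite /= /GRing.mul /= /mulc /=.
apply/eqP; rewrite eq_complex /=; apply/andP; split; apply/eqP; ring.
Qed.

Lemma eig_real (R : rcfType) (A : 'I_3 -> 'I_3 -> R[i]) (v : 'I_3 -> R[i]) (lam : R[i]) :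
  (forall j k, complex.Im (A j k) = 0) -> (forall j k, A j k = A k j) ->
  (forall j, \sum_(k < 3) A j k * v k = lam * v j) -> (exists j, v j != 0) ->
  complex.Im lam = 0.
Proof.
move=> Ar As Hv [j0 Hj0].
pose s := \sum_(j < 3) (v j)^*%C * \sum_(k < 3) A j k * v k.
pose n := \sum_(j < 3) (v j)^*%C * v j.
have sE : s = lam * n.
  rewrite /s /n mulr_sumr; apply: eq_bigr => j _; rewrite Hv; ring.
have cs : (s^*)%C = s.
  have cA j k : ((A j k)^*)%C = A j k by rewrite conj_re.
  rewrite /s !sum3 !(rmorphD, rmorphM) /= !conjcK !cA.
  rewrite [A o1 o0]As [A o2 o0]As [A o2 o1]As; ring.
have nE : n = (\sum_(j < 3) (complex.Re (v j) ^+ 2 + complex.Im (v j) ^+ 2))%:C%C.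
  by rewrite rmorph_sum; apply: eq_bigr => j _; rewrite normsq_c.
have nr : (n^*)%C = n by rewrite nE conjc_real.
have n0 : n != 0.
  rewrite nE; apply/negP => /eqP H.
  have : (\sum_(j < 3) (complex.Re (v j) ^+ 2 + complex.Im (v j) ^+ 2)) = 0.
    by apply: complexI; rewrite H.
  move/eqP; rewrite psumr_eq0; last by move=> j _; rewrite addr_ge0 ?sqr_ge0.
  move=> /allP /(_ j0 (mem_index_enum _)) /=.
  rewrite paddr_eq0 ?sqr_ge0 // !sqrf_eq0 => /andP [/eqP h1 /eqP h2].
  by move: Hj0; case: (v j0) h1 h2 => a b /= -> ->; rewrite eqxx.
have := cs; rewrite sE rmorphM /= nr.
move/(mulIf n0); clear -R; case: lam => a b /= [] /eqP.
move=> h; have : b *+ 2 = 0 by rewrite mulr2n -{1}(eqP h) addNr.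
by move/eqP; rewrite mulrn_eq0 /= => /eqP.
Qed.

Lemma sumsq3_eq0 (R : realDomainType) (r : 'I_3 -> R) :
  r o0 ^+ 2 + r o1 ^+ 2 + r o2 ^+ 2 = 0 -> forall k, r k = 0.
Proof.
move=> H; have /andP[h0 c] : (r o0 ^+ 2 + r o1 ^+ 2 == 0) && (r o2 ^+ 2 == 0).
  by rewrite -paddr_eq0 ?addr_ge0 ?sqr_ge0 // H.
move: h0; rewrite paddr_eq0 ?sqr_ge0 // => /andP[a b].
by apply: ord3P; apply/eqP; rewrite -sqrf_eq0.
Qed.

Lemma iso_zero (R : rcfType) (u1 u2 u3 : 'I_3 -> R[i]) :
  bdot u1 u1 = 0 -> bdot u2 u2 = 0 -> bdot u3 u3 = 0 ->
  bdot u1 u2 = 0 -> bdot u2 u3 = 0 -> bdot u3 u1 = 0 ->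
  (forall i j k, complex.Im (cube3 u1 i j k + cube3 u2 i j k + cube3 u3 i j k) = 0) ->
  forall i j k, cube3 u1 i j k + cube3 u2 i j k + cube3 u3 i j k = 0.
Proof.
move=> h11 h22 h33 h12 h23 h31 Hr l j.
pose g k := cube3 u1 l j k + cube3 u2 l j k + cube3 u3 l j k.
have h21 : bdot u2 u1 = 0 by rewrite bdotC.
have h32 : bdot u3 u2 = 0 by rewrite bdotC.
have h13 : bdot u1 u3 = 0 by rewrite bdotC.
have gu v : bdot u1 v = 0 -> bdot u2 v = 0 -> bdot u3 v = 0 -> \sum_(k < 3) g k * v k = 0.
  by move=> a b c; rewrite /g contr a b c; ring.
have gg : \sum_(k < 3) g k * g k = 0.
  have -> : \sum_(k < 3) g k * g k =
    u1 l * u1 j * (\sum_(k < 3) g k * u1 k) + u2 l * u2 j * (\sum_(k < 3) g k * u2 k)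
    + u3 l * u3 j * (\sum_(k < 3) g k * u3 k).
    rewrite !sum3 /g /cube3; ring.
  by rewrite !gu //; ring.
have gE k : g k = (complex.Re (g k))%:C%C by apply: Im0E; apply: Hr.
have : (complex.Re (g o0) ^+ 2 + complex.Re (g o1) ^+ 2 + complex.Re (g o2) ^+ 2) = 0.
  apply: complexI; rewrite !rmorphD !rmorphXn rmorph0 /= -!gE -gg sum3; ring.
move/(@sumsq3_eq0 _ (fun k => complex.Re (g k))) => H k; rewrite -/(g k) gE H //.
Qed.

Lemma cube_root {R : rcfType} (r : R) : exists c : R, c ^+ 3 = r.
Proof.
pose b := `|r| + 1.
have hb : 1 <= b by rewrite /b lerDr normr_ge0.
have h1 : r <= `|r| := ler_norm r.
have h2 : - `|r| <= r by have := ler_norm (- r); rewrite normrN; lra.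
have hb3 : b <= b ^+ 3.
  have : 1 <= b ^+ 2 by rewrite expr_ge1 // (le_trans ler01 hb).
  by move=> h; rewrite exprS ler_peMr // (le_trans ler01 hb).
have [||c _ /rootP] := @poly_ivt R ('X^3 - r%:P) (- b) b.
- by have := le_trans ler01 hb; lra.
- rewrite !hornerE; apply/andP; split.
    have -> : (- b) ^+ 3 = - b ^+ 3 by rewrite exprNn; ring.
    rewrite /b in hb3 *; lra.
  rewrite /b in hb3 *; lra.
by rewrite !hornerE => /eqP; rewrite subr_eq0 => /eqP h; exists c.
Qed.

Lemma cvec_bdot (R : rcfType) (a b : 'I_3 -> R) :
  bdot (cvec a) (cvec b) = (bdot a b)%:C%C.
Proof. by rewrite /bdot /cvec !sum3 !rmorphD !rmorphM. Qed.

Lemma realify {R : rcfType} (v : 'I_3 -> R[i]) :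
  (forall l, complex.Im (bdot v v * v l) = 0) ->
  exists (a : 'I_3 -> R) (k m : R[i]),
    (forall l, cvec a l = k * v l) /\ m * bdot v v = 0 /\
    (forall i j k', cube3 v i j k' = (cube3 a i j k')%:C%C + cube3 (fun l => m * v l) i j k').
Proof.
move=> Hv; set N := bdot v v.
have [N0|N0] := eqVneq N 0.
  exists (fun _ => 0), 0, 1; split; first by move=> l; rewrite /cvec mul0r.
  split; first by rewrite N0 mulr0.
  by move=> i j k; rewrite /cube3 !mul1r !mul0r add0r.
pose w l := complex.Re (N * v l).
have wE l : (w l)%:C%C = N * v l by rewrite /w -Im0E.
pose r := bdot w w.
have rE : r%:C%C = N ^+ 3.
  rewrite /r -cvec_bdot /bdot /cvec !sum3 !wE /N /bdot !sum3; ring.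
have [c c3] := cube_root r.
have c0 : c != 0.
  apply/eqP => c0; move: rE; rewrite -c3 c0 expr0n /= rmorph0 => /esym/eqP.
  by rewrite expf_eq0 /= (negbTE N0).
have cC0 : (c%:C)%C != 0 by rewrite (inj_eq (@complexI R)).
exists (fun l => w l / c), (N / c%:C%C), 0; split.
  by move=> l; rewrite /cvec rmorphM fmorphV /= wE; ring.
split; first by rewrite mul0r.
have k3 : (N / c%:C%C) ^+ 3 = 1.
  by rewrite exprMn exprVn -rmorphXn /= c3 rE divff // expf_eq0 /= (negbTE N0).
move=> i j k; rewrite /cube3 !mul0r addr0 !rmorphM !fmorphV /= !wE.
rewrite -[LHS]mul1r -k3; ring.
Qed.

Lemma Im_subC (R : rcfType) (x : R[i]) (y : R) :
  complex.Im (x - y%:C%C) = complex.Im x.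
Proof. by case: x => a b /=; rewrite oppr0 addr0. Qed.

Lemma bdot_scale (K : comNzRingType) (k k' : K) (u w : 'I_3 -> K) :
  bdot (fun l => k * u l) (fun l => k' * w l) = k * k' * bdot u w.
Proof. rewrite /bdot !sum3; ring. Qed.

Lemma eigen_im {R : rcfType} (f : tensor3 R[i]) (a b c : 'I_3 -> R[i]) :
  symmetric3 f -> real_valued f ->
  (forall i j k, f i j k = cube3 a i j k + cube3 b i j k + cube3 c i j k) ->
  bdot b a = 0 -> bdot c a = 0 ->
  forall l, complex.Im (bdot a a * a l) = 0.
Proof.
move=> Hs Hr Hf hba hca l.
have [nz|z] := boolP [exists j, a j != 0]; last first.
  have -> : a l = 0 by move: z; rewrite negb_exists => /forallP /(_ l); rewrite negbK => /eqP.
  by rewrite mulr0.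
rewrite mulrC; apply: (@eig_real R (fun j k => f l j k) a).
- by move=> j k; apply: Hr.
- by move=> j k; case: (Hs l j k).
- move=> j; rewrite (eq_bigr (fun k => (cube3 a l j k + cube3 b l j k + cube3 c l j k) * a k)).
    by rewrite contr hba hca; ring.
  by move=> k _; rewrite Hf.
- by move/existsP: nz.
Qed.

Lemma part1 (R : rcfType) (f : tensor3 R[i]) :
  symmetric3 f -> real_valued f ->
  (exists alpha beta gamma : 'I_3 -> R[i],
      (forall i j k, f i j k = cube3 alpha i j k + cube3 beta i j k + cube3 gamma i j k) /\
      bdot alpha beta = 0 /\ bdot beta gamma = 0 /\ bdot gamma alpha = 0) ->
  (exists alpha' beta' gamma' : 'I_3 -> R,
      (forall i j k, f i j k =
         ctens (fun i j k => cube3 alpha' i j k + cube3 beta' i j k + cube3 gamma' i j k) i j k) /\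
      bdot alpha' beta' = 0 /\ bdot beta' gamma' = 0 /\ bdot gamma' alpha' = 0).
Proof.
move=> Hs Hr [al [be [ga [Hf [hab [hbg hga]]]]]].
have hba : bdot be al = 0 by rewrite bdotC.
have hgb : bdot ga be = 0 by rewrite bdotC.
have hag : bdot al ga = 0 by rewrite bdotC.
have Hf2 i j k : f i j k = cube3 be i j k + cube3 ga i j k + cube3 al i j k.
  by rewrite Hf; ring.
have Hf3 i j k : f i j k = cube3 ga i j k + cube3 al i j k + cube3 be i j k.
  by rewrite Hf; ring.
have [a1 [k1 [m1 [c1 [n1 e1]]]]] := @realify R al (@eigen_im R f al be ga Hs Hr Hf hba hga).
have [a2 [k2 [m2 [c2 [n2 e2]]]]] := @realify R be (@eigen_im R f be ga al Hs Hr Hf2 hgb hab).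
have [a3 [k3 [m3 [c3 [n3 e3]]]]] := @realify R ga (@eigen_im R f ga al be Hs Hr Hf3 hag hbg).
have rdot (a b : 'I_3 -> R) k k' (u w : 'I_3 -> R[i]) :
    (forall l, cvec a l = k * u l) -> (forall l, cvec b l = k' * w l) ->
    bdot u w = 0 -> bdot a b = 0.
  move=> ha hb huw; apply: (@complexI R); rewrite rmorph0 -cvec_bdot.
  rewrite (_ : bdot (cvec a) (cvec b) = bdot (fun l => k * u l) (fun l => k' * w l)).
    by rewrite bdot_scale huw mulr0.
  by rewrite /bdot; apply: eq_bigr => l _; rewrite ha hb.
exists a1, a2, a3; split; last first.
  split; first exact: (rdot _ _ _ _ _ _ c1 c2 hab).
  split; first exact: (rdot _ _ _ _ _ _ c2 c3 hbg).
  exact: (rdot _ _ _ _ _ _ c3 c1 hga).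
pose u1 := fun l => m1 * al l.
pose u2 := fun l => m2 * be l.
pose u3 := fun l => m3 * ga l.
have Z := @iso_zero R u1 u2 u3.
have uE i j k : cube3 u1 i j k + cube3 u2 i j k + cube3 u3 i j k =
   f i j k - (cube3 a1 i j k + cube3 a2 i j k + cube3 a3 i j k)%:C%C.
  rewrite Hf e1 e2 e3 !rmorphD; ring.
have {}Z : forall i j k, cube3 u1 i j k + cube3 u2 i j k + cube3 u3 i j k = 0.
  apply: Z.
  - by rewrite /u1 bdot_scale -mulrA n1 mulr0.
  - by rewrite /u2 bdot_scale -mulrA n2 mulr0.
  - by rewrite /u3 bdot_scale -mulrA n3 mulr0.
  - by rewrite /u1 /u2 bdot_scale hab mulr0.
  - by rewrite /u2 /u3 bdot_scale hbg mulr0.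
  - by rewrite /u3 /u1 bdot_scale hga mulr0.
  - by move=> i j k; rewrite uE Im_subC; apply: Hr.
move=> i j k; move: (Z i j k); rewrite uE /ctens => /eqP; rewrite subr_eq0 => /eqP.
by [].
Qed.

Definition cross {K : comNzRingType} (u v : 'I_3 -> K) : 'I_3 -> K := fun l =>
  if val l == 0%N then u o1 * v o2 - u o2 * v o1
  else if val l == 1%N then u o2 * v o0 - u o0 * v o2
  else u o0 * v o1 - u o1 * v o0.

Definition ON {K : comNzRingType} (t1 t2 t3 : 'I_3 -> K) :=
  bdot t1 t1 = 1 /\ bdot t2 t2 = 1 /\ bdot t3 t3 = 1 /\
  bdot t1 t2 = 0 /\ bdot t2 t3 = 0 /\ bdot t3 t1 = 0.

Lemma ON_rot {K : comNzRingType} (t1 t2 t3 : 'I_3 -> K) : ON t1 t2 t3 -> ON t2 t3 t1.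
Proof. by rewrite /ON; intuition. Qed.

Lemma cross_ON {K : comNzRingType} (t1 t2 : 'I_3 -> K) :
  bdot t1 t1 = 1 -> bdot t2 t2 = 1 -> bdot t1 t2 = 0 -> ON t1 t2 (cross t1 t2).
Proof.
move=> h1 h2 h12; do !split => //.
- have -> : bdot (cross t1 t2) (cross t1 t2) = bdot t1 t1 * bdot t2 t2 - bdot t1 t2 ^+ 2.
    by rewrite /bdot /cross !sum3 /=; ring.
  by rewrite h1 h2 h12; ring.
- by rewrite /bdot /cross !sum3 /=; ring.
- by rewrite /bdot /cross !sum3 /=; ring.
Qed.

Definition rows3 {K : comNzRingType} (t1 t2 t3 : 'I_3 -> K) : 'M[K]_3 :=
  \matrix_(i, j) (if val i == 0%N then t1 j else if val i == 1%N then t2 j else t3 j).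

Lemma rows3_ON {K : comNzRingType} (t1 t2 t3 : 'I_3 -> K) :
  ON t1 t2 t3 -> rows3 t1 t2 t3 *m (rows3 t1 t2 t3)^T = 1%:M.
Proof.
case=> [h1 [h2 [h3 [h12 [h23 h31]]]]].
have h21 : bdot t2 t1 = 0 by rewrite bdotC.
have h32 : bdot t3 t2 = 0 by rewrite bdotC.
have h13 : bdot t1 t3 = 0 by rewrite bdotC.
move: h1 h2 h3 h12 h23 h31 h21 h32 h13; rewrite /bdot !sum3 => h1 h2 h3 h12 h23 h31 h21 h32 h13.
apply/matrixP; apply: ord3P; apply: ord3P;
  rewrite !mxE sum3 !mxE /= ?mulr1n ?mulr0n;
  first [ by rewrite -h1; ring | by rewrite -h2; ring | by rewrite -h3; ring
        | by rewrite -h12; ring | by rewrite -h23; ring | by rewrite -h31; ring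
        | by rewrite -h21; ring | by rewrite -h32; ring | by rewrite -h13; ring ].
Qed.

Lemma ON_expand {K : comNzRingType} (t1 t2 t3 c : 'I_3 -> K) : ON t1 t2 t3 ->
  forall l, c l = bdot c t1 * t1 l + bdot c t2 * t2 l + bdot c t3 * t3 l.
Proof.
move=> /rows3_ON /mulmx1C /matrixP E.
have E' m l : t1 m * t1 l + t2 m * t2 l + t3 m * t3 l = (m == l)%:R.
  by move: (E m l); rewrite !mxE sum3 !mxE /=.
move=> l.
have -> : bdot c t1 * t1 l + bdot c t2 * t2 l + bdot c t3 * t3 l =
  c o0 * (o0 == l)%:R + c o1 * (o1 == l)%:R + c o2 * (o2 == l)%:R.
  by rewrite -!E' /bdot !sum3; ring.
by move: l; apply: ord3P => /=; ring.
Qed.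

Lemma bdot_sc {K : comNzRingType} (x t y : 'I_3 -> K) (s : K) :
  (forall l, x l = s * t l) -> bdot x y = s * bdot t y.
Proof. by move=> h; rewrite /bdot mulr_sumr; apply: eq_bigr => l _; rewrite h mulrA. Qed.

Lemma zero_vec {R : realDomainType} (x : 'I_3 -> R) : bdot x x = 0 -> forall l, x l = 0.
Proof. by rewrite /bdot sum3 -!expr2; apply: sumsq3_eq0. Qed.

Lemma bdot_ge0 {R : realDomainType} (x : 'I_3 -> R) : 0 <= bdot x x.
Proof. by rewrite /bdot sum3 -!expr2 !addr_ge0 ?sqr_ge0. Qed.

Lemma vnorm {R : rcfType} (x : 'I_3 -> R) : bdot x x != 0 ->
  exists t s, bdot t t = 1 /\ s != 0 /\ forall l, x l = s * t l.
Proof.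
move=> nz; have pos : 0 < bdot x x by rewrite lt0r nz bdot_ge0.
pose s := Num.sqrt (bdot x x).
have s0 : s != 0 by rewrite /s sqrtr_eq0 -ltNge.
exists (fun l => x l / s), s; split; last split => //.
  rewrite (@bdot_sc _ (fun l => x l / s) x _ s^-1); last by move=> l; rewrite mulrC.
  rewrite bdotC (@bdot_sc _ (fun l => x l / s) x _ s^-1); last by move=> l; rewrite mulrC.
  by rewrite mulrA -expr2 exprVn sqr_sqrtr ?ltW // mulVf.
by move=> l; rewrite mulrC divfK.
Qed.

Lemma perp_of {R : rcfType} (t x : 'I_3 -> R) : bdot x x != 0 -> bdot t x = 0 ->
  exists u, bdot u u = 1 /\ bdot t u = 0.
Proof.
move=> nz tx; have [u [s [uu [s0 xE]]]] := vnorm _ nz.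
exists u; split => //; move: tx; rewrite bdotC (bdot_sc _ _ _ _ xE) => /eqP.
by rewrite mulf_eq0 (negbTE s0) /= bdotC => /eqP.
Qed.

Lemma perp {R : rcfType} (t : 'I_3 -> R) : bdot t t = 1 ->
  exists u, bdot u u = 1 /\ bdot t u = 0.
Proof.
move=> tt.
have ct m : bdot t (cross t (ebasis R m)) = 0.
  by rewrite /bdot /cross !sum3 /=; ring.
have [n0|z0] := eqVneq (bdot (cross t (ebasis R o0)) (cross t (ebasis R o0))) 0;
  last exact: perp_of _ _ z0 (ct _).
have [n1|z1] := eqVneq (bdot (cross t (ebasis R o1)) (cross t (ebasis R o1))) 0;
  last exact: perp_of _ _ z1 (ct _).
have [n2|z2] := eqVneq (bdot (cross t (ebasis R o2)) (cross t (ebasis R o2))) 0;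
  last exact: perp_of _ _ z2 (ct _).
exfalso.
have : bdot (cross t (ebasis R o0)) (cross t (ebasis R o0))
     + bdot (cross t (ebasis R o1)) (cross t (ebasis R o1))
     + bdot (cross t (ebasis R o2)) (cross t (ebasis R o2)) = 2 * bdot t t.
  by rewrite /bdot /cross /ebasis !sum3 /=; ring.
by rewrite n0 n1 n2 tt !addr0 mulr1 => /eqP; rewrite eq_sym pnatr_eq0.
Qed.

Definition aligned {K : comNzRingType} (a b c t1 t2 t3 : 'I_3 -> K) :=
  exists s1 s2 s3 : K, (forall l, a l = s1 * t1 l) /\ (forall l, b l = s2 * t2 l) /\
     (forall l, c l = s3 * t3 l).

Lemma K1 {R : rcfType} (a b c : 'I_3 -> R) : bdot a a != 0 ->
  bdot a b = 0 -> bdot b c = 0 -> bdot c a = 0 ->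
  exists t1 t2 t3, ON t1 t2 t3 /\ aligned a b c t1 t2 t3.
Proof.
move=> na hab hbc hca.
have [t1 [s1 [h1 [s10 aE]]]] := vnorm _ na.
have ort y : bdot a y = 0 -> bdot t1 y = 0.
  by rewrite (bdot_sc _ _ _ _ aE) => /eqP; rewrite mulf_eq0 (negbTE s10) => /eqP.
have ct1 : bdot c t1 = 0 by rewrite bdotC ort // bdotC.
have [bz|nb] := eqVneq (bdot b b) 0.
  have bE l : b l = 0 * l%:R by rewrite mul0r (zero_vec _ bz).
  have [cz|nc] := eqVneq (bdot c c) 0.
    have [t2 [h2 h12]] := perp _ h1.
    exists t1, t2, (cross t1 t2); split; first exact: cross_ON.
    exists s1, 0, 0; split => //; split => l; by rewrite mul0r ?(zero_vec _ bz) ?(zero_vec _ cz).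
  have [t3 [s3 [h3 [s30 cE]]]] := vnorm _ nc.
  have h31 : bdot t3 t1 = 0.
    by move: ct1; rewrite (bdot_sc _ _ _ _ cE) => /eqP; rewrite mulf_eq0 (negbTE s30) => /eqP.
  exists t1, (cross t3 t1), t3; split; first by apply: ON_rot; apply: cross_ON.
  exists s1, 0, s3; split => //; split => // l; by rewrite mul0r (zero_vec _ bz).
have [t2 [s2 [h2 [s20 bE]]]] := vnorm _ nb.
have h12 : bdot t1 t2 = 0.
  move: (ort _ hab); rewrite bdotC (bdot_sc _ _ _ _ bE) => /eqP.
  by rewrite mulf_eq0 (negbTE s20) bdotC => /eqP.
have ct2 : bdot c t2 = 0.
  by move: hbc; rewrite (bdot_sc _ _ _ _ bE) => /eqP; rewrite mulf_eq0 (negbTE s20) bdotC => /eqP.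
have ON3 := cross_ON _ _ h1 h2 h12.
exists t1, t2, (cross t1 t2); split => //.
exists s1, s2, (bdot c (cross t1 t2)); split => //; split => // l.
by rewrite (ON_expand _ _ _ c ON3 l) ct1 ct2 !mul0r !add0r.
Qed.

Lemma complete {R : rcfType} (a b c : 'I_3 -> R) :
  bdot a b = 0 -> bdot b c = 0 -> bdot c a = 0 ->
  exists t1 t2 t3, ON t1 t2 t3 /\ aligned a b c t1 t2 t3.
Proof.
move=> hab hbc hca.
have [az|na] := eqVneq (bdot a a) 0; last exact: K1.
have [bz|nb] := eqVneq (bdot b b) 0.
  have [cz|nc] := eqVneq (bdot c c) 0.
    exists (ebasis R o0), (ebasis R o1), (ebasis R o2); split.
      by rewrite /ON /bdot /ebasis !sum3 /=; do !split; ring.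
    by exists 0, 0, 0; split; [|split] => l; rewrite mul0r zero_vec.
  have [t3 [t1 [t2 [O [s3 [s1 [s2 [cE [aE bE]]]]]]]]] := K1 _ _ _ nc hca hab hbc.
  exists t1, t2, t3; split; first by apply: ON_rot.
  by exists s1, s2, s3.
have [t2 [t3 [t1 [O [s2 [s3 [s1 [bE [cE aE]]]]]]]]] := K1 _ _ _ nb hbc hca hab.
exists t1, t2, t3; split; first by do 2 apply: ON_rot.
by exists s1, s2, s3.
Qed.

Definition Tv {K : comNzRingType} (T : 'M[K]_3) (x : 'I_3 -> K) : 'I_3 -> K :=
  fun i => \sum_(p < 3) T i p * x p.

Lemma tact3 {K : comNzRingType} (T : 'M[K]_3) (x y z : 'I_3 -> K) i j k :
  tens_act T (fun i j k => cube3 x i j k + cube3 y i j k + cube3 z i j k) i j k =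
  cube3 (Tv T x) i j k + cube3 (Tv T y) i j k + cube3 (Tv T z) i j k.
Proof. rewrite /tens_act /cube3 /Tv !sum3; ring. Qed.

Lemma Tv_row {K : comNzRingType} (t1 t2 t3 x : 'I_3 -> K) (s : K) m :
  rows3 t1 t2 t3 *m (rows3 t1 t2 t3)^T = 1%:M ->
  (forall l, x l = s * rows3 t1 t2 t3 m l) ->
  forall i, Tv (rows3 t1 t2 t3) x i = s * (i == m)%:R.
Proof.
move=> /matrixP TT xE i.
have := TT i m; rewrite !mxE => <-.
rewrite /Tv mulr_sumr; apply: eq_bigr => p _; rewrite xE !mxE; ring.
Qed.

Lemma tens_map {R : rcfType} (T : 'M[R]_3) (g : tensor3 R) i j k :
  tens_act (map_mx (fun x : R => x%:C%C) T) (ctens g) i j k = (tens_act T g i j k)%:C%C.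
Proof.
rewrite /tens_act /ctens !sum3 !mxE !rmorphD !rmorphM //.
Qed.

Lemma tens_ext {K : pzRingType} (T : 'M[K]_3) (f g : tensor3 K) :
  (forall p q r, f p q r = g p q r) -> forall i j k, tens_act T f i j k = tens_act T g i j k.
Proof.
move=> h i j k; rewrite /tens_act; apply: eq_bigr => p _; apply: eq_bigr => q _.
by apply: eq_bigr => r _; rewrite h.
Qed.

Theorem mainTheorem2 (R : realType) (f : tensor3 R[i]) :
  symmetric3 f -> real_valued f ->
  (exists alpha beta gamma : 'I_3 -> R[i],
      (forall i j k, f i j k = cube3 alpha i j k + cube3 beta i j k + cube3 gamma i j k) /\
      bdot alpha beta = 0 /\ bdot beta gamma = 0 /\ bdot gamma alpha = 0) ->
  (exists alpha' beta' gamma' : 'I_3 -> R,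
      (forall i j k, f i j k =
         ctens (fun i j k => cube3 alpha' i j k + cube3 beta' i j k + cube3 gamma' i j k) i j k) /\
      bdot alpha' beta' = 0 /\ bdot beta' gamma' = 0 /\ bdot gamma' alpha' = 0)
  /\
  (exists (T : 'M[R]_3) (a b c : R),
      T *m T^T = 1%:M /\
      forall i j k,
        tens_act (map_mx (fun x : R => x%:C%C) T) f i j k =
        ctens (fun i j k => a * cube3 (ebasis R (@Ordinal 3 0 isT)) i j k + b * cube3 (ebasis R (@Ordinal 3 1 isT)) i j k
                            + c * cube3 (ebasis R (@Ordinal 3 2 isT)) i j k) i j k).
Proof.
move=> Hs Hr Hex.
have P1 := @part1 R f Hs Hr Hex; split; first exact: P1.
case: P1 => [a [b [c [Hf [hab [hbc hca]]]]]].
have [t1 [t2 [t3 [O [s1 [s2 [s3 [aE [bE cE]]]]]]]]] := complete _ _ _ hab hbc hca.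
have TT := rows3_ON _ _ _ O.
have aE' l : a l = s1 * rows3 t1 t2 t3 o0 l by rewrite mxE.
have bE' l : b l = s2 * rows3 t1 t2 t3 o1 l by rewrite mxE.
have cE' l : c l = s3 * rows3 t1 t2 t3 o2 l by rewrite mxE.
exists (rows3 t1 t2 t3), (s1 ^+ 3), (s2 ^+ 3), (s3 ^+ 3); split => // i j k.
rewrite (tens_ext _ _ _ Hf) tens_map tact3 /ctens; congr (_%:C)%C.
rewrite /cube3 !(Tv_row _ _ _ _ _ _ TT aE') !(Tv_row _ _ _ _ _ _ TT bE') !(Tv_row _ _ _ _ _ _ TT cE').
rewrite /ebasis; ring.
Qed.
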